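(* GDD message passing always converges: for any input, the sequence of dual objective values $g(\boldsymbol\lambda^{(k)})$, $k=1,2,\dots$, computed after each sweep of GDD converges (to a finite limit).
   Context: Let $\mathcal{V}=\{1,\dots,n\}$; each variable $x_i$ takes values in a finite set, $\mathbf{x}_s=(x_i)_{i\in s}$ for $s\subseteq\mathcal{V}$. Let $\mathcal{C}$ be a collection of subsets of $\mathcal{V}$ with real potentials $\theta_c(\mathbf{x}_c)$. Let $\mathcal{C}'$ be a finite collection of subsets of $\mathcal{V}$ and for each $c\in\mathcal{C}'$ let $\mathcal{S}(c)$ be a collection of subsets of $c$ (possibly containing $c$), with $\mathcal{S}(c)\setminus\{c\}\neq\emptyset$ and $\mathcal{C}'\cup\bigcup_{c}\mathcal{S}(c)\supseteq\mathcal{C}$; put $\mathcal{T}=\mathcal{C}'\cup\bigcup_{c\in\mathcal{C}'}\mathcal{S}(c)$. Messages are reals $\lambda_{c\to s}(\mathbf{x}_s)$, $c\in\mathcal{C}'$, $s\in\mathcal{S}(c)\setminus\{c\}$. For $t\in\mathcal{T}$: $\hat\theta_t=\mathbb{1}(t\in\mathcal{C})\theta_t$; $\gamma_t(\mathbf{x}_t)=\mathbb{1}(t\in\mathcal{C}')\sum_{\hat s\in\mathcal{S}(t)\setminus\{t\}}\lambda_{t\to\hat s}(\mathbf{x}_{\hat s})$; $\lambda_t(\mathbf{x}_t)=\sum_{c'\in\mathcal{C}':\,t\in\mathcal{S}(c')\setminus\{c'\}}\lambda_{c'\to t}(\mathbf{x}_t)$; beliefs $b_t=\hat\theta_t+\lambda_t-\gamma_t$;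 dual objective $g(\boldsymbol\lambda)=\sum_{t\in\mathcal{T}}\max_{\mathbf{x}_t}b_t(\mathbf{x}_t)$. For $c\in\mathcal{C}'$, $s\in\mathcal{S}(c)\setminus\{c\}$, $\lambda_s^{-c}(\mathbf{x}_s)=\sum_{\hat c\in\mathcal{C}':\,\hat c\ne c,\ s\in\mathcal{S}(\hat c)\setminus\{\hat c\}}\lambda_{\hat c\to s}(\mathbf{x}_s)$. GDD message passing: start with all messages equal to $0$; in each sweep, go through the clusters $c\in\mathcal{C}'$ one at a time and replace, for all $s\in\mathcal{S}(c)\setminus\{c\}$ and $\mathbf{x}_s$ simultaneously, $\lambda_{c\to s}(\mathbf{x}_s)$ by $\lambda^*_{c\to s}(\mathbf{x}_s)=-\hat\theta_s(\mathbf{x}_s)+\gamma_s(\mathbf{x}_s)-\lambda_s^{-c}(\mathbf{x}_s)+\frac{1}{|\mathcal{S}(c)\setminus\{c\}|}\max_{\mathbf{x}_{c\setminus s}}[\hat\theta_c(\mathbf{x}_c)+\lambda_c(\mathbf{x}_c)+\sum_{\hat s\in\mathcal{S}(c)\setminus\{c\}}(\hat\theta_{\hat s}-\gamma_{\hat s}+\lambda^{-c}_{\hat s})(\mathbf{x}_{\hat s})]$ (all quantities evaluated at the current messages); after each sweep $k$ record $g(\boldsymbol\lambda^{(k)})$. *)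

(* Defs.v *)
From HB Require Import structures.
From mathcomp Require Import all_boot all_order all_algebra.
From mathcomp Require Import all_classical all_reals all_analysis.
Set Implicit Arguments. Unset Strict Implicit. Unset Printing Implicit Defensive.
Import Order.TTheory GRing.Theory Num.Theory.
Local Open Scope ring_scope.

Section GDD.
Variables (R : realType) (n : nat) (D : 'I_n -> finType).

(* full assignments x = (x_i)_{i in V}; a function of x_s is represented as a
   function of the full assignment (it only ever depends on the coordinates in s) *)
Definition assign := {dffun forall i : 'I_n, D i}.

Definition agree (s : {set 'I_n}) (x y : assign) : bool :=
  [forall i in s, x i == y i].

(* max over all assignments (0 if there is none; never used in that case) *)
Definition maxX (f : assign -> R) : R :=
  if [pick x : assign] is Some x0 then \big[Num.max/f x0]_(y : assign) f y else 0.

(* max_{x_{c \ s}} f, as a function of x_s (f depends only on x_c) *)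
Definition maxOn (s : {set 'I_n}) (f : assign -> R) (x : assign) : R :=
  \big[Num.max/f x]_(y : assign | agree s x y) f y.

Variables (C Cp : {set {set 'I_n}}) (S : {set 'I_n} -> {set {set 'I_n}})
  (theta : {set 'I_n} -> assign -> R).

(* messages lam c s x = lambda_{c -> s}(x_s) *)
Definition msg := {set 'I_n} -> {set 'I_n} -> assign -> R.

Definition Sm (c : {set 'I_n}) := S c :\ c.
Definition Tset := Cp :|: \bigcup_(c in Cp) S c.

Definition thetah (t : {set 'I_n}) (x : assign) : R :=
  if t \in C then theta t x else 0.
Definition gammaf (lam : msg) (t : {set 'I_n}) (x : assign) : R :=
  if t \in Cp then \sum_(sh in Sm t) lam t sh x else 0.
Definition lamt (lam : msg) (t : {set 'I_n}) (x : assign) : R :=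
  \sum_(c' in Cp | t \in Sm c') lam c' t x.
Definition belief (lam : msg) (t : {set 'I_n}) (x : assign) : R :=
  thetah t x + lamt lam t x - gammaf lam t x.
Definition dual_obj (lam : msg) : R :=
  \sum_(t in Tset) maxX (belief lam t).
Definition lamminus (lam : msg) (c s : {set 'I_n}) (x : assign) : R :=
  \sum_(ch in Cp | (ch != c) && (s \in Sm ch)) lam ch s x.

Definition gdd_update (lam : msg) (c : {set 'I_n}) : msg :=
  fun c0 s x =>
    if (c0 == c) && (s \in Sm c) then
      - thetah s x + gammaf lam s x - lamminus lam c s x
      + (#|Sm c|%:R)^-1 *
        maxOn s (fun y => thetah c y + lamt lam c y
                   + \sum_(sh in Sm c) (thetah sh y - gammaf lam sh y + lamminus lam c sh y)) x
    else lam c0 s x.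

Definition gdd_sweep (ord : seq {set 'I_n}) (lam : msg) : msg :=
  foldl gdd_update lam ord.

Definition msg0 : msg := fun _ _ _ => 0.

Definition gdd_iter (ord : seq {set 'I_n}) (k : nat) : msg :=
  iter k (gdd_sweep ord) msg0.

End GDD.

(* Main.v *)
Require Import Defs.
From HB Require Import structures.
From mathcomp Require Import all_boot all_order all_algebra.
From mathcomp Require Import all_classical all_reals all_analysis.
From mathcomp Require Import ring.
Import Order.TTheory GRing.Theory Num.Theory numFieldNormedType.Exports.
Local Open Scope ring_scope.
Local Open Scope classical_set_scope.

Section Aux.
Variables (R : realType) (n : nat) (D : 'I_n -> finType).
Local Notation A := (assign D).

Lemma bigmax_seq_ge (I : eqType) (r : seq I) (P : pred I) (F : I -> R) i y :
  y \in r -> P y -> F y <= \big[Num.max/i]_(z <- r | P z) F z.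
Proof.
elim: r => [//|a r IH]; rewrite inE big_cons => /orP [/eqP<-|yr] Py.
  by rewrite Py le_max lexx.
case: (P a); last exact: IH.
by rewrite le_max (IH yr Py) orbT.
Qed.

Lemma bigmax_le_gen (I : Type) (r : seq I) (P : pred I) (F : I -> R) i M :
  i <= M -> (forall y, P y -> F y <= M) -> \big[Num.max/i]_(z <- r | P z) F z <= M.
Proof.
move=> iM FM; apply: (big_ind (fun v => v <= M)) => //.
by move=> a b aM bM; rewrite ge_max aM bM.
Qed.

Lemma bigmax_ge_idx (I : Type) (r : seq I) (P : pred I) (F : I -> R) i :
  i <= \big[Num.max/i]_(z <- r | P z) F z.
Proof.
apply: (big_rec (fun v => i <= v)) => // a b _ ib.
by rewrite le_max ib orbT.
Qed.

Lemma maxX_ge (f : A -> R) y : f y <= maxX f.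
Proof.
rewrite /maxX; case: pickP => [x0 _|/(_ y)//].
by apply: bigmax_seq_ge => //; rewrite mem_index_enum.
Qed.

Lemma maxX_le (x0 : A) (f : A -> R) M : (forall y, f y <= M) -> maxX f <= M.
Proof.
move=> fM; rewrite /maxX; case: pickP => [x1 _|/(_ x0)//].
by apply: bigmax_le_gen.
Qed.

Lemma eq_maxX (f g : A -> R) : (forall y, f y = g y) -> maxX f = maxX g.
Proof.
move=> fg; rewrite /maxX; case: pickP => [x1 _|//].
by rewrite fg; apply: eq_bigr.
Qed.

Lemma maxOn_ge s (f : A -> R) x : f x <= maxOn s f x.
Proof. exact: bigmax_ge_idx. Qed.

Lemma maxOn_le s (f : A -> R) x : maxOn s f x <= maxX f.
Proof.
by apply: bigmax_le_gen => [|y _]; apply: maxX_ge.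
Qed.

End Aux.

Section Main.
Variables (R : realType) (n : nat) (D : 'I_n -> finType).
Variables (C Cp : {set {set 'I_n}}) (S : {set 'I_n} -> {set {set 'I_n}})
  (theta : {set 'I_n} -> assign D -> R).
Local Notation A := (assign D).
Local Notation msg := (msg R D).
Local Notation Sm := (Sm S).
Local Notation thetah := (thetah C theta).
Local Notation gammaf := (gammaf Cp S).
Local Notation lamt := (lamt Cp S).
Local Notation lamminus := (lamminus Cp S).
Local Notation belief := (belief C Cp S theta).
Local Notation upd := (gdd_update C Cp S theta).

Lemma notin_Sm c : c \notin Sm c.
Proof. by rewrite /Sm !inE eqxx. Qed.

Lemma lamt_split (lam : msg) c t x : c \in Cp -> t \in Sm c ->
  lamt lam t x = lam c t x + lamminus lam c t x.
Proof.
move=> cC tS; rewrite /Defs.lamt (bigD1 c) /=; last by rewrite cC tS.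
congr (_ + _); apply: eq_bigl => ch.
by case: (ch \in Cp); case: (ch == c); case: (t \in Sm ch).
Qed.

Section Upd.
Variables (lam : msg) (c : {set 'I_n}).
Hypothesis cC : c \in Cp.
Local Notation lam' := (upd lam c).

Lemma upd_other c0 s x : ~~ ((c0 == c) && (s \in Sm c)) -> lam' c0 s x = lam c0 s x.
Proof. by move=> h; rewrite /gdd_update (negbTE h). Qed.

Lemma lamminus_upd s x : lamminus lam' c s x = lamminus lam c s x.
Proof.
apply: eq_bigr => ch /andP [_ /andP [ch_c _]].
by rewrite upd_other // (negbTE ch_c).
Qed.

Lemma gammaf_upd t x : t != c -> gammaf lam' t x = gammaf lam t x.
Proof.
move=> tc; rewrite /Defs.gammaf; case: (t \in Cp) => //.
by apply: eq_bigr => sh _; rewrite upd_other // (negbTE tc).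
Qed.

Lemma lamt_upd t x : t \notin Sm c -> lamt lam' t x = lamt lam t x.
Proof.
move=> tS; apply: eq_bigr => ch _.
by rewrite upd_other // negb_and (negbTE tS) orbT.
Qed.

Lemma belief_upd_other t x : t != c -> t \notin Sm c -> belief lam' t x = belief lam t x.
Proof. by move=> tc tS; rewrite /Defs.belief gammaf_upd // lamt_upd. Qed.

Definition Fc (y : A) : R := thetah c y + lamt lam c y
  + \sum_(sh in Sm c) (thetah sh y - gammaf lam sh y + lamminus lam c sh y).

Local Notation m := (#|Sm c|%:R : R).

Lemma belief_upd_s s x : s \in Sm c -> belief lam' s x = m^-1 * maxOn s Fc x.
Proof.
move=> sS.
have sc : s != c by apply/eqP => esc; move: sS; rewrite esc (negbTE (notin_Sm c)).
rewrite /Defs.belief gammaf_upd // (@lamt_split lam' c s x cC sS) lamminus_upd.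
rewrite /gdd_update eqxx sS /=.
rewrite -/(Fc).
ring.
Qed.


Lemma belief_upd_c y : belief lam' c y = Fc y - \sum_(s in Sm c) m^-1 * maxOn s Fc y.
Proof.
rewrite /Defs.belief lamt_upd ?notin_Sm // /Defs.gammaf cC.
rewrite (eq_bigr (fun sh => (m^-1 * maxOn sh Fc y) - (thetah sh y - gammaf lam sh y + lamminus lam c sh y))); last first.
  by move=> sh shS; rewrite /gdd_update eqxx shS /=; ring.
rewrite sumrB /Fc; ring.
Qed.

Lemma belief_sum y : Fc y = belief lam c y + \sum_(s in Sm c) belief lam s y.
Proof.
rewrite (eq_bigr (fun s => (thetah s y - gammaf lam s y + lamminus lam c s y) + lam c s y)); last first.
  by move=> s sS; rewrite /Defs.belief (@lamt_split lam c s y cC sS); ring.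
rewrite big_split /= /Defs.belief /Defs.gammaf cC /Fc; ring.
Qed.

Lemma dual_upd_le : Sm c != finset.set0 -> dual_obj C Cp S theta lam' <= dual_obj C Cp S theta lam.
Proof.
move=> ne.
case: (pickP (fun _ : A => true)) => [x0 _|none]; last first.
  have z : forall f : A -> R, maxX f = 0.
    by move=> f; rewrite /maxX; case: pickP => [x _|//]; have := none x.
  by rewrite /dual_obj !big1.
set U := c |: Sm c.
have UT : U \subset Tset Cp S.
  apply/fintype.subsetP => t; rewrite /U in_setU1 => /orP [/eqP->|tS]; rewrite /Tset inE ?cC //.
  apply/orP; right; apply/bigcupP; exists c => //.
  by move: tS; rewrite /Sm in_setD1 => /andP [].
have spl : forall lm : msg, dual_obj C Cp S theta lm =
    \sum_(t in Tset Cp S :\: U) maxX (belief lm t)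
    + (maxX (belief lm c) + \sum_(s in Sm c) maxX (belief lm s)).
  by move=> lm; rewrite /dual_obj (big_setID U) /= (finset.setIidPr UT) big_setU1 ?notin_Sm //= [LHS]addrC.
rewrite !spl.
have -> : \sum_(t in Tset Cp S :\: U) maxX (belief lam' t) =
          \sum_(t in Tset Cp S :\: U) maxX (belief lam t).
  apply: eq_bigr => t; rewrite finset.in_setD /U finset.in_setU1 negb_or => /andP [/andP [tc tS] _].
  by apply: eq_maxX => y; rewrite belief_upd_other.
rewrite lerD2l.
have mK : forall r : R, r = \sum_(s in Sm c) m^-1 * r.
  move=> r; rewrite sumr_const -[RHS]mulr_natr mulrAC mulVf ?mul1r //.
  by rewrite pnatr_eq0 -lt0n card_gt0.
apply: (@le_trans _ _ (maxX Fc)).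
  rewrite -[maxX Fc]add0r; apply: lerD.
    apply: (@maxX_le _ _ _ x0) => y; rewrite belief_upd_c subr_le0 {1}(mK (Fc y)).
    apply: ler_sum => s _; apply: ler_wpM2l; first by rewrite invr_ge0 ler0n.
    exact: maxOn_ge.
  rewrite {1}(mK (maxX Fc)); apply: ler_sum => s sS.
  apply: (@maxX_le _ _ _ x0) => x; rewrite belief_upd_s //.
  apply: ler_wpM2l; first by rewrite invr_ge0 ler0n.
  exact: maxOn_le.
apply: (@maxX_le _ _ _ x0) => y; rewrite belief_sum.
apply: lerD; first exact: maxX_ge.
by apply: ler_sum => s _; exact: maxX_ge.
Qed.

End Upd.
Hypothesis Sne : forall c, c \in Cp -> Sm c != finset.set0.

Lemma sweep_le (ord : seq {set 'I_n}) (lam : msg) : {subset ord <= Cp} ->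
  dual_obj C Cp S theta (gdd_sweep C Cp S theta ord lam) <= dual_obj C Cp S theta lam.
Proof.
elim: ord lam => [|c r IH] lam sub /=; first by rewrite /gdd_sweep.
have cC : c \in Cp by apply: sub; rewrite inE eqxx.
rewrite /gdd_sweep /=.
apply: (@le_trans _ _ (dual_obj C Cp S theta (upd lam c))); last first.
  by apply: dual_upd_le => //; apply: Sne.
apply: IH => d dr; apply: sub; by rewrite inE dr orbT.
Qed.

Definition lowB : R := if [pick x : A] is Some x0 then \sum_(t in Tset Cp S) thetah t x0 else 0.

Lemma sum_lamt (lam : msg) x :
  \sum_(t in Tset Cp S) lamt lam t x = \sum_(t in Tset Cp S) gammaf lam t x.
Proof.
have ST : forall c t, c \in Cp -> t \in Sm c -> t \in Tset Cp S.
  move=> c t cC; rewrite /Sm finset.in_setD1 => /andP [_ tS].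
  rewrite /Tset finset.in_setU; apply/orP; right; apply/bigcupP; by exists c.
rewrite /Defs.lamt (exchange_big_dep (fun c => c \in Cp)) /=; last by move=> t c _ /andP [].
rewrite /Defs.gammaf -big_mkcondr /=.
have -> : \sum_(t | (t \in Tset Cp S) && (t \in Cp)) \sum_(sh in Sm t) lam t sh x =
          \sum_(t in Cp) \sum_(sh in Sm t) lam t sh x.
  apply: eq_bigl => t; case tC: (t \in Cp); rewrite ?andbF ?andbT //.
  by rewrite /Tset finset.in_setU tC.
apply: eq_bigr => c cC; apply: eq_bigl => t.
rewrite cC /=; case tS: (t \in Sm c); rewrite ?andbF ?andbT //.
exact: ST tS.
Qed.

Lemma lowB_le (lam : msg) : lowB <= dual_obj C Cp S theta lam.
Proof.
rewrite /lowB; case: pickP => [x0 _|none]; last first.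
  rewrite /dual_obj big1 // => t _.
  by rewrite /maxX; case: pickP => [x _|//]; have := none x.
apply: (@le_trans _ _ (\sum_(t in Tset Cp S) belief lam t x0)); last first.
  by apply: ler_sum => t _; exact: maxX_ge.
rewrite /Defs.belief sumrB big_split /= sum_lamt addrK.
by [].
Qed.

End Main.

Theorem proposition3 (R : realType) (n : nat) (D : 'I_n -> finType)
  (C Cp : {set {set 'I_n}}) (S : {set 'I_n} -> {set {set 'I_n}})
  (theta : {set 'I_n} -> assign D -> R) (ord : seq {set 'I_n}) :
  (forall i : 'I_n, (0 < #|D i|)%N) ->
  (forall c, c \in C -> forall x y : assign D, agree c x y -> theta c x = theta c y) ->
  (forall c, c \in Cp -> S c \subset powerset c) ->
  (forall c, c \in Cp -> Sm S c != finset.set0) ->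
  C \subset Tset Cp S ->
  perm_eq ord (enum Cp) ->
  exists l : R,
    (fun k : nat => dual_obj C Cp S theta (gdd_iter C Cp S theta ord k.+1)) @ \oo --> l.
Proof.
move=> _ _ _ Sne _ pe.
have sub : {subset ord <= Cp}.
  by move=> c; rewrite (perm_mem pe) mem_enum.
set u := fun k : nat => _.
eexists; apply: nonincreasing_cvgn.
  apply/nonincreasing_seqP => k; rewrite /u /gdd_iter iterS.
  exact: sweep_le.
exists (@lowB R n D C Cp S theta) => _ [k _ <-].
exact: lowB_le.
Qed.
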